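(* Let $\varphi$ be a forecasting system and $\omega\in\Omega$ a path. Then $\omega$ is S-random for $\varphi$ if and only if there is no computable non-negative supermartingale $M$ for $\varphi$ that is computably unbounded on $\omega$, i.e. there are no such $M$ and real growth function $\tau$ with $\limsup_{n\to\infty}[M(\omega_{1:n})-\tau(n)]\ge0$.
   Context: Notation: $\mathbb N_0=\{0,1,2,\dots\}$. $\Omega=\{0,1\}^{\mathbb N}$ is the set of paths $\omega=(\omega_1,\omega_2,\dots)$; $\omega_{1:n}=(\omega_1,\dots,\omega_n)$, $\omega_{1:0}=\square$. $\mathbb S=\bigcup_{n\in\mathbb N_0}\{0,1\}^n$ is the set of situations, $sx$ concatenation. $\mathscr I$ is the set of closed intervals $I\subseteq[0,1]$. For $r\in[0,1]$, $f:\{0,1\}\to\mathbb R$: $E_r(f)=rf(1)+(1-r)f(0)$; $\overline E_I(f)=\max_{r\in I}E_r(f)$. A forecasting system is a map $\varphi:\mathbb S\to\mathscr I$. A real process is $F:\mathbb S\to\mathbb R$; $\Delta F(s)$ is $x\mapsto F(sx)-F(s)$. $M$ is a supermartingale for $\varphi$ if $\overline E_{\varphi(s)}(\Delta M(s))\le0$ for all $s$. A test supermartingale for $\varphi$ is a non-negative supermartingale $T$ for $\varphi$ with $T(\square)=1$. Computability: a map from $\mathbb S$ or $\mathbb S\times\mathbb N_0$ (or $\mathbb N_0$) to $\mathbb Q$ is recursive if Turing-computable; a real map $r$ on such a domain is computable if there is a recursive rational $q$ with $|r(d)-q(d,n)|<2^{-n}$ for all $d,n$. A real growth function is a computable, non-decreasing,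 unbounded map $\tau:\mathbb N_0\to[0,\infty)$. $\omega$ is S-random for $\varphi$ if there are no positive, rational-valued, recursive test supermartingale $T$ for $\varphi$ and real growth function $\tau$ with $\limsup_n[T(\omega_{1:n})-\tau(n)]\ge0$. *)

(* Defs.v *)
From Stdlib Require Import Reals List.
From Coquelicot Require Import Coquelicot.
Import ListNotations.
Open Scope R_scope.

(* A situation is a finite binary sequence; [s ++ [x]] is the concatenation sx. *)
Definition situation := list bool.

(* A path omega : nat -> bool, where [omega i] is the (i+1)-th outcome
   omega_{i+1}.  [prefix omega n] = omega_{1:n}, and prefix omega 0 = []. *)
Definition prefix (omega : nat -> bool) (n : nat) : situation :=
  map omega (seq 0 n).

Definition interval01 (I : R * R) : Prop :=
  0 <= fst I /\ fst I <= snd I /\ snd I <= 1.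

Definition in_interval (I : R * R) (r : R) : Prop := fst I <= r <= snd I.

Definition forecasting_system (phi : situation -> R * R) : Prop :=
  forall s, interval01 (phi s).

Definition Ex (r : R) (f : bool -> R) : R := r * f true + (1 - r) * f false.

Definition Delta (F : situation -> R) (s : situation) : bool -> R :=
  fun x => F (s ++ [x]) - F s.

(* upper expectation bounded by 0:  max_{r in I} E_r(f) <= 0,
   i.e. E_r(f) <= 0 for every r in I (the max over the compact I is attained). *)
Definition upper_exp_le0 (I : R * R) (f : bool -> R) : Prop :=
  forall r, in_interval I r -> Ex r f <= 0.

Definition supermartingale (phi : situation -> R * R) (M : situation -> R) : Prop :=
  forall s, upper_exp_le0 (phi s) (Delta M s).

Definition test_supermartingale (phi : situation -> R * R) (T : situation -> R) : Prop :=
  supermartingale phi T /\ (forall s, 0 <= T s) /\ T [] = 1.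

Inductive rec_code : Type :=
| rZero : rec_code
| rSucc : rec_code
| rProj : nat -> rec_code
| rComp : rec_code -> list rec_code -> rec_code
| rPrim : rec_code -> rec_code -> rec_code
| rMu   : rec_code -> rec_code.

Inductive eval : rec_code -> list nat -> nat -> Prop :=
| eZero xs : eval rZero xs 0
| eSucc x xs : eval rSucc (x :: xs) (S x)
| eProj i xs : eval (rProj i) xs (nth i xs 0%nat)
| eComp f gs xs ys z :
    Forall2 (fun g y => eval g xs y) gs ys -> eval f ys z -> eval (rComp f gs) xs z
| ePrim0 f g xs z : eval f xs z -> eval (rPrim f g) (0%nat :: xs) z
| ePrimS f g n xs y z :
    eval (rPrim f g) (n :: xs) y -> eval g (n :: y :: xs) z ->
    eval (rPrim f g) (S n :: xs) z
| eMu f xs y :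
    eval f (y :: xs) 0%nat ->
    (forall k, (k < y)%nat -> exists v, eval f (k :: xs) (S v)) ->
    eval (rMu f) xs y.

Definition recursive1 (g : nat -> nat) : Prop :=
  exists p, forall n, eval p [n] (g n).
Definition recursive2 (g : nat -> nat -> nat) : Prop :=
  exists p, forall n m, eval p [n; m] (g n m).

(* Standard bijective binary coding of situations by natural numbers. *)
Fixpoint code (s : situation) : nat :=
  match s with
  | [] => 0%nat
  | b :: t => (2 * code t + (if b then 2 else 1))%nat
  end.

Definition ratQ (a b c : nat) : R := (INR a - INR b) / (INR c + 1).

Definition recursive_rat_S (q : situation -> R) : Prop :=
  exists a b c : nat -> nat, recursive1 a /\ recursive1 b /\ recursive1 c /\
    forall s, q s = ratQ (a (code s)) (b (code s)) (c (code s)).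

Definition recursive_rat_SN (q : situation -> nat -> R) : Prop :=
  exists a b c : nat -> nat -> nat, recursive2 a /\ recursive2 b /\ recursive2 c /\
    forall s n, q s n = ratQ (a (code s) n) (b (code s) n) (c (code s) n).

Definition recursive_rat_NN (q : nat -> nat -> R) : Prop :=
  exists a b c : nat -> nat -> nat, recursive2 a /\ recursive2 b /\ recursive2 c /\
    forall d n, q d n = ratQ (a d n) (b d n) (c d n).

Definition computable_S (r : situation -> R) : Prop :=
  exists q, recursive_rat_SN q /\ forall s n, Rabs (r s - q s n) < / 2 ^ n.

Definition computable_N (r : nat -> R) : Prop :=
  exists q, recursive_rat_NN q /\ forall d n, Rabs (r d - q d n) < / 2 ^ n.

Definition real_growth_function (tau : nat -> R) : Prop :=
  computable_N tau /\ (forall n, 0 <= tau n) /\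
  (forall n m, (n <= m)%nat -> tau n <= tau m) /\
  (forall B, exists n, B < tau n).

Definition limsup_ge0 (F : situation -> R) (tau : nat -> R) (omega : nat -> bool) : Prop :=
  Rbar_le (Finite 0) (LimSup_seq (fun n => F (prefix omega n) - tau n)).

Definition S_random (phi : situation -> R * R) (omega : nat -> bool) : Prop :=
  ~ exists (T : situation -> R) (tau : nat -> R),
      (forall s, 0 < T s) /\ recursive_rat_S T /\ test_supermartingale phi T /\
      real_growth_function tau /\ limsup_ge0 T tau omega.

(* Main.v *)
Require Import Defs.
From Stdlib Require Import Reals List Lia Lra Lia.
From Coquelicot Require Import Coquelicot.
Import ListNotations.
Open Scope R_scope.
Lemma eval_eq p xs v w : eval p xs v -> v = w -> eval p xs w.
Proof. intros H ->; exact H. Qed.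

Lemma eval_comp2 ph p1 p2 xs a b c :
  eval p1 xs a -> eval p2 xs b -> eval ph [a; b] c -> eval (rComp ph [p1; p2]) xs c.
Proof.
  intros H1 H2 H3. apply (eComp ph [p1;p2] xs [a;b] c); auto.
Qed.

Definition padd := rPrim (rProj 0) (rComp rSucc [rProj 1]).
Lemma padd_ok n y : eval padd [n; y] (n + y)%nat.
Proof.
  induction n.
  - apply ePrim0. exact (eProj 0 [y]).
  - apply (ePrimS _ _ n [y] (n+y)%nat); [exact IHn|].
    apply (eComp rSucc [rProj 1] _ [(n+y)%nat]).
    + constructor; [exact (eProj 1 (n :: (n+y)%nat :: [y]))| constructor].
    + apply eSucc.
Qed.

Definition pmul := rPrim rZero (rComp padd [rProj 1; rProj 2]).
Lemma pmul_ok n y : eval pmul [n; y] (n * y)%nat.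
Proof.
  induction n.
  - apply ePrim0. apply eZero.
  - apply (ePrimS _ _ n [y] (n*y)%nat); [exact IHn|].
    eapply eval_comp2; [exact (eProj 1 (n :: (n*y)%nat :: [y]))
                       |exact (eProj 2 (n :: (n*y)%nat :: [y]))|].
    apply (eval_eq _ _ _ _ (padd_ok _ _)). simpl. lia.
Qed.

Fixpoint cst (k : nat) : rec_code :=
  match k with O => rZero | S k => rComp rSucc [cst k] end.
Lemma cst_ok k xs : eval (cst k) xs k.
Proof.
  induction k; simpl.
  - apply eZero.
  - apply (eComp rSucc [cst k] xs [k]); [constructor; auto| apply eSucc].
Qed.

Lemma rec2_const k : recursive2 (fun _ _ => k).
Proof. exists (cst k). intros; apply cst_ok. Qed.
Lemma rec2_p0 : recursive2 (fun n _ => n).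
Proof. exists (rProj 0). intros n m. exact (eProj 0 [n;m]). Qed.
Lemma rec2_p1 : recursive2 (fun _ m => m).
Proof. exists (rProj 1). intros n m. exact (eProj 1 [n;m]). Qed.
Lemma rec2_comp h g1 g2 : recursive2 h -> recursive2 g1 -> recursive2 g2 ->
  recursive2 (fun n m => h (g1 n m) (g2 n m)).
Proof.
  intros [ph Hh] [p1 H1] [p2 H2]. exists (rComp ph [p1;p2]).
  intros; eapply eval_comp2; eauto.
Qed.
Lemma rec2_add f g : recursive2 f -> recursive2 g -> recursive2 (fun n m => f n m + g n m)%nat.
Proof.
  intros Hf Hg. apply (rec2_comp Nat.add f g); auto.
  exists padd; intros; apply padd_ok.
Qed.
Lemma rec2_mul f g : recursive2 f -> recursive2 g -> recursive2 (fun n m => f n m * g n m)%nat.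
Proof.
  intros Hf Hg. apply (rec2_comp Nat.mul f g); auto.
  exists pmul; intros; apply pmul_ok.
Qed.
Lemma rec2_ext f g : recursive2 f -> (forall n m, f n m = g n m) -> recursive2 g.
Proof. intros [p H] E. exists p. intros; rewrite <- E; auto. Qed.
Lemma rec1_of2 f : recursive2 f -> recursive1 (fun n => f n 0%nat).
Proof.
  intros [p H]. exists (rComp p [rProj 0; rZero]). intros n.
  eapply eval_comp2; [exact (eProj 0 [n]) | apply eZero | apply H].
Qed.
Lemma rec2_of1 f : recursive1 f -> recursive2 (fun n _ => f n).
Proof.
  intros [p H]. exists (rComp p [rProj 0]). intros n m.
  apply (eComp p [rProj 0] [n;m] [n]); [constructor; [exact (eProj 0 [n;m])|constructor]|apply H].
Qed.

Lemma ratQ_plus a1 b1 c1 a2 b2 c2 :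
  ratQ a1 b1 c1 + ratQ a2 b2 c2 =
  ratQ (a1*(c2+1) + a2*(c1+1)) (b1*(c2+1) + b2*(c1+1)) (c1*c2+c1+c2).
Proof.
  unfold ratQ. rewrite !plus_INR, !mult_INR, !plus_INR. change (INR 1) with 1.
  pose proof (pos_INR c1); pose proof (pos_INR c2).
  field; repeat split; nra.
Qed.
Lemma ratQ_mult a1 b1 c1 a2 b2 c2 :
  ratQ a1 b1 c1 * ratQ a2 b2 c2 =
  ratQ (a1*a2 + b1*b2) (a1*b2 + b1*a2) (c1*c2+c1+c2).
Proof.
  unfold ratQ. rewrite !plus_INR, !mult_INR, ?plus_INR. change (INR 1) with 1.
  pose proof (pos_INR c1); pose proof (pos_INR c2).
  field; repeat split; nra.
Qed.

Definition RR2 (f : nat -> nat -> R) : Prop :=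
  exists a b c, recursive2 a /\ recursive2 b /\ recursive2 c /\
    forall n m, f n m = ratQ (a n m) (b n m) (c n m).

Lemma RR2_const k1 k2 k3 : RR2 (fun _ _ => ratQ k1 k2 k3).
Proof. exists (fun _ _ => k1), (fun _ _ => k2), (fun _ _ => k3). repeat split; auto using rec2_const. Qed.

Lemma RR2_plus f g : RR2 f -> RR2 g -> RR2 (fun n m => f n m + g n m).
Proof.
  intros (a1&b1&c1&Ha1&Hb1&Hc1&E1) (a2&b2&c2&Ha2&Hb2&Hc2&E2).
  eexists _, _, _. split; [|split; [|split]].
  4: intros n m; rewrite E1, E2, ratQ_plus; reflexivity.
  all: repeat first [apply rec2_add | apply rec2_mul | apply rec2_const | assumption].
Qed.

Lemma RR2_mult f g : RR2 f -> RR2 g -> RR2 (fun n m => f n m * g n m).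
Proof.
  intros (a1&b1&c1&Ha1&Hb1&Hc1&E1) (a2&b2&c2&Ha2&Hb2&Hc2&E2).
  eexists _, _, _. split; [|split; [|split]].
  4: intros n m; rewrite E1, E2, ratQ_mult; reflexivity.
  all: repeat first [apply rec2_add | apply rec2_mul | apply rec2_const | assumption].
Qed.

Lemma RR2_comp f g1 g2 : RR2 f -> recursive2 g1 -> recursive2 g2 ->
  RR2 (fun n m => f (g1 n m) (g2 n m)).
Proof.
  intros (a&b&c&Ha&Hb&Hc&E) H1 H2.
  exists (fun n m => a (g1 n m) (g2 n m)), (fun n m => b (g1 n m) (g2 n m)),
         (fun n m => c (g1 n m) (g2 n m)).
  repeat split; try (apply rec2_comp; assumption). intros; apply E.
Qed.

Lemma RR2_ext f g : RR2 f -> (forall n m, f n m = g n m) -> RR2 g.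
Proof. intros (a&b&c&Ha&Hb&Hc&E) E'. exists a, b, c. repeat split; auto. intros; rewrite <- E'; auto. Qed.

Lemma code_app_lt s x : (code s < code (s ++ [x]))%nat.
Proof. induction s as [|b t IH]; simpl; [destruct x; lia|destruct b; lia]. Qed.

Lemma nat_ineq c : (3*(c+1)*(c+2) <= 16 * 2^c)%nat.
Proof.
  induction c as [|c IH]; [simpl; lia|].
  destruct c as [|c]; [simpl; lia|].
  rewrite Nat.pow_succ_r'. nia.
Qed.

Lemma real_ineq c : 3 * (INR c + 1) * (INR c + 2) <= 16 * 2 ^ c.
Proof.
  pose proof (nat_ineq c) as H. apply le_INR in H.
  rewrite !mult_INR, !plus_INR, pow_INR in H. rewrite ?S_INR, ?INR_0 in H. replace ((0+1+1)^c) with (2^c) in H by (f_equal; ring). ring_simplify in H. ring_simplify. lra.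
Qed.

Lemma pow2_pos n : 0 < 2 ^ n.
Proof. apply pow_lt; lra. Qed.

Lemma small_err c : / 2 ^ (c + 3) <= / (INR c + 1).
Proof.
  pose proof (real_ineq c). pose proof (pos_INR c).
  apply Rinv_le_contravar; [lra|]. rewrite pow_add. simpl. nra.
Qed.

Lemma div_le_inv a b d : 0 < b -> 0 < d -> a * d <= b -> a / b <= / d.
Proof.
  intros Hb Hd H. apply (Rmult_le_reg_r (b * d)); [nra|].
  replace (a / b * (b * d)) with (a * d) by (field; lra).
  replace (/ d * (b * d)) with b by (field; lra). exact H.
Qed.

Lemma key_ineq c c' : (c < c')%nat ->
  / 2 ^ (c' + 3) + / (INR c' + 1) + / 2 ^ (c + 3) <= / (INR c + 1).
Proof.
  intros Hc. pose proof (real_ineq c) as H. pose proof (pos_INR c) as Hc0.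
  assert (H1 : INR c + 1 <= INR c') by (rewrite <- S_INR; apply le_INR; lia).
  assert (/ (INR c' + 1) <= / (INR c + 2)) by (apply Rinv_le_contravar; lra).
  assert (/ 2 ^ (c' + 3) <= / 2 ^ (c + 4)).
  { apply Rinv_le_contravar; [apply pow2_pos|]. apply Rle_pow; [lra|lia]. }
  rewrite !pow_add in *. simpl in *.
  set (X := 2 ^ c) in *. assert (0 < X) by apply pow2_pos.
  assert (/ (X * (2 * (2 * (2 * (2 * 1))))) + / (INR c + 2) +
          / (X * (2 * (2 * (2 * 1)))) <= / (INR c + 1)); [|lra].
  replace (/ (X * (2 * (2 * (2 * (2 * 1))))) + / (INR c + 2) + / (X * (2 * (2 * (2 * 1)))))
    with (3 / (16 * X) + / (INR c + 2)) by (field; lra).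
  assert (3 / (16 * X) <= / ((INR c + 1) * (INR c + 2))).
  { apply div_le_inv; [lra|nra|lra]. }
  replace (/ (INR c + 1)) with (/ ((INR c + 1) * (INR c + 2)) + / (INR c + 2))
    by (field; lra). lra.
Qed.

Lemma ratQ_inv d : ratQ 1 0 d = / (INR d + 1).
Proof. unfold ratQ. simpl. pose proof (pos_INR d). field. lra. Qed.

Theorem proposition6 (phi : situation -> R * R) (omega : nat -> bool) :
  forecasting_system phi ->
  (S_random phi omega <->
   ~ exists (M : situation -> R) (tau : nat -> R),
       computable_S M /\ (forall s, 0 <= M s) /\ supermartingale phi M /\
       real_growth_function tau /\ limsup_ge0 M tau omega).
Proof.
  intros Hphi. split.
  2:{ intros Hno (T & tau & Tpos & [a [b [c [Ha [Hb [Hc HT]]]]]] & [Tsup [T0 T1]] & Htau & Hlim).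
      apply Hno. exists T, tau.
      refine (conj _ (conj T0 (conj Tsup (conj Htau Hlim)))).
      exists (fun s _ => T s). split.
      - exists (fun n _ => a n), (fun n _ => b n), (fun n _ => c n).
        repeat split; try apply rec2_of1; auto.
      - intros s n. unfold Rminus. rewrite Rplus_opp_r, Rabs_R0.
        apply Rinv_0_lt_compat, pow2_pos. }
  intros Hrand (M & tau & [q [Hq Happ]] & HM0 & Hsup & Htau & Hlim).
  apply Hrand.
  destruct Hq as (A & B & C & HA & HB & HC & Eq).
  set (U := fun s => q s (code s + 3)%nat + / (INR (code s) + 1)).
  assert (HUM : forall s, M s <= U s).
  { intros s. unfold U. pose proof (Happ s (code s + 3)%nat) as H.
    pose proof (small_err (code s)). apply Rabs_def2 in H. lra. }
  assert (HUD : forall s x, U (s ++ [x]) - U s <= M (s ++ [x]) - M s).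
  { intros s x. unfold U.
    pose proof (Happ s (code s + 3)%nat) as H. apply Rabs_def2 in H.
    pose proof (Happ (s ++ [x]) (code (s ++ [x]) + 3)%nat) as H'. apply Rabs_def2 in H'.
    pose proof (key_ineq _ _ (code_app_lt s x)). lra. }
  destruct (Pow_x_infinity 2 ltac:(rewrite Rabs_pos_eq; lra) (U [])) as [j Hj].
  specialize (Hj j (Nat.le_refl j)). rewrite Rabs_pos_eq in Hj by (apply pow_le; lra).
  set (K := / 2 ^ j).
  assert (HK0 : 0 < K) by (apply Rinv_0_lt_compat, pow2_pos).
  assert (HK1 : K <= 1).
  { unfold K. rewrite <- Rinv_1. apply Rinv_le_contravar; [lra|].
    apply pow_R1_Rle. lra. }
  assert (HKU : K * U [] <= 1).
  { unfold K. pose proof (pow2_pos j).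
    apply (Rmult_le_reg_l (2 ^ j)); [lra|]. field_simplify; lra. }
  assert (HKQ : ratQ 1 0 (2 ^ j - 1) = K).
  { rewrite ratQ_inv. unfold K. f_equal.
    assert (H : (1 <= 2 ^ j)%nat) by (change 1%nat with (2^0)%nat; apply Nat.pow_le_mono_r; lia).
    rewrite minus_INR by exact H. rewrite pow_INR. change (INR 2) with 2; change (INR 1) with 1. ring. }
  set (T := fun s => K * U s + (1 - K * U [])).
  set (tau' := fun n => K * tau n).
  exists T, tau'.
  assert (HUpos : forall s, 0 <= U s) by (intros s; specialize (HUM s); specialize (HM0 s); lra).
  split; [|split; [|split; [|split]]].
  - intros s. unfold T. pose proof (HUM s). pose proof (HM0 s).
    pose proof (key_ineq (code s) (S (code s)) (Nat.lt_succ_diag_r _)).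
    assert (M s < U s).
    { unfold U in *. pose proof (Happ s (code s + 3)%nat) as H5. apply Rabs_def2 in H5.
      pose proof (Rinv_0_lt_compat _ (pow2_pos (S (code s) + 3))).
      pose proof (pos_INR (S (code s))).
      pose proof (Rinv_0_lt_compat (INR (S (code s)) + 1) ltac:(lra)). lra. }
    nra.
  - set (F := fun d (m : nat) =>
          ratQ 1 0 (2 ^ j - 1) * (ratQ (A d (d + 3)%nat) (B d (d + 3)%nat) (C d (d + 3)%nat) + ratQ 1 0 d)
          + (ratQ 1 0 0 + ratQ 0 1 0 * (ratQ 1 0 (2 ^ j - 1) *
              (ratQ (A 0%nat 3%nat) (B 0%nat 3%nat) (C 0%nat 3%nat) + ratQ 1 0 0)))).
    assert (HF : RR2 F).
    { unfold F. apply RR2_plus.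
      - apply RR2_mult; [apply RR2_const|]. apply RR2_plus.
        + apply (RR2_comp (fun d n => ratQ (A d n) (B d n) (C d n))).
          * exists A, B, C. repeat split; auto.
          * apply rec2_p0.
          * apply rec2_add; [apply rec2_p0|apply rec2_const].
        + exists (fun _ _ => 1%nat), (fun _ _ => 0%nat), (fun d _ => d).
          repeat split; auto using rec2_const, rec2_p0.
      - apply RR2_plus; [apply RR2_const|]. apply RR2_mult; [apply RR2_const|].
        apply RR2_mult; [apply RR2_const|]. apply RR2_plus; apply RR2_const. }
    destruct HF as (a & b & c & Ha & Hb & Hc & EF).
    exists (fun n => a n 0%nat), (fun n => b n 0%nat), (fun n => c n 0%nat).
    repeat split; try apply rec1_of2; auto.
    intros s. rewrite <- EF. unfold F, T, U. rewrite HKQ, !ratQ_inv.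
    simpl (code []). change (0+3)%nat with 3%nat. rewrite (Eq [] 3%nat). simpl (code []).
    replace (ratQ 0 1 0) with (-1) by (unfold ratQ; simpl; field).
    change (INR 0) with 0. change (0+3)%nat with 3%nat. rewrite Eq. replace (/ (0 + 1)) with 1 by field. ring.
  - split; [|split].
    + intros s r Hr. destruct (Hphi s) as [H1 [H2 H3]]. unfold in_interval in Hr.
      assert (0 <= r <= 1) by lra.
      pose proof (HUD s true). pose proof (HUD s false).
      pose proof (Hsup s r Hr) as HS.
      replace (Ex r (Defs.Delta T s)) with (K * Ex r (Defs.Delta U s)) by (unfold Ex, Defs.Delta, T; ring).
      assert (Ex r (Defs.Delta U s) <= Ex r (Defs.Delta M s)).
      { unfold Ex, Defs.Delta. nra. }
      nra.
    + intros s. unfold T. pose proof (HUpos s). nra.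
    + unfold T. ring.
  - destruct Htau as ([qt [Hqt Hqta]] & Ht0 & Htm & Htu).
    split; [|split; [|split]].
    + exists (fun d n => ratQ 1 0 (2 ^ j - 1) * qt d n). split.
      * apply RR2_mult; [apply RR2_const|exact Hqt].
      * intros d n. rewrite HKQ. unfold tau'.
        replace (K * tau d - K * qt d n) with (K * (tau d - qt d n)) by ring.
        rewrite Rabs_mult, (Rabs_pos_eq K) by lra.
        pose proof (Hqta d n). pose proof (Rabs_pos (tau d - qt d n)).
        pose proof (Rinv_0_lt_compat _ (pow2_pos n)). nra.
    + intros n. unfold tau'. pose proof (Ht0 n). nra.
    + intros n m Hnm. unfold tau'. pose proof (Htm n m Hnm). nra.
    + intros Bd. destruct (Htu (Bd / K)) as [n Hn]. exists n. unfold tau'.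
      apply (Rmult_lt_compat_l K) in Hn; [|lra].
      replace (K * (Bd / K)) with Bd in Hn by (field; lra). exact Hn.
  - unfold limsup_ge0 in *.
    eapply Rbar_le_trans; [|apply (LimSup_le (fun n => K * (M (prefix omega n) - tau n)))].
    + destruct (ex_LimSup_seq (fun n => M (prefix omega n) - tau n)) as [l Hl].
      rewrite (is_LimSup_seq_unique _ _ Hl) in Hlim.
      rewrite (is_LimSup_seq_unique _ _ (is_LimSup_seq_scal_pos K _ l HK0 Hl)).
      destruct l as [l| |]; simpl in *.
      * nra.
      * destruct (Rle_dec 0 K); [|lra]. destruct (Rle_lt_or_eq_dec 0 K r); [exact I|lra].
      * contradiction.
    + exists 0%nat. intros n _. unfold T, tau'.
      pose proof (HUM (prefix omega n)). nra.
Qed.
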